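(* Let $K$ be a field, $R$ a connected $\mathbb N$-graded $K$-algebra, and let $A$ be a graded double Ore extension of $R$ with generators $x_1,x_2$, relation $x_2x_1=p_{12}x_1x_2+p_{11}x_1^2+\tau_1x_1+\tau_2x_2+\tau_0$, and maps $\sigma=(\sigma_{ij})$, $\delta$. Then $A$ is a graded skew PBW extension of $R$ (in $x_1,x_2$) if and only if $p_{12}\neq0$, $p_{11}=0$, $\sigma_{11}$ and $\sigma_{22}$ are automorphisms of $R$, and $\sigma_{12}(r)=\sigma_{21}(r)=0$ for all $r\in R$.
   Context: A graded algebra is connected if its degree-zero part is $K$. A $K$-algebra $B\supseteq R$ is a right double Ore extension of $R$ if it is generated by $R$ and $x_1,x_2$; $x_2x_1=p_{12}x_1x_2+p_{11}x_1^2+\tau_1x_1+\tau_2x_2+\tau_0$ with $p_{12},p_{11}\in K$, $\tau_i\in R$; $B$ is a free left $R$-module with basis $\{x_1^ax_2^b\}_{a,b\ge0}$; and $x_1R+x_2R\subseteq Rx_1+Rx_2+R$. The maps are defined by $x_ir=\sigma_{i1}(r)x_1+\sigma_{i2}(r)x_2+\delta_i(r)$. A left double Ore extension: generated by $R$ and $x_1,x_2$, $x_1x_2=p'_{12}x_2x_1+p'_{11}x_1^2+x_1\tau'_1+x_2\tau'_2+\tau'_0$ ($p'\in K$, $\tau'\in R$), free right $R$-module with basis $\{x_1^ax_2^b\}$, and $x_1R+x_2R\subseteq Rx_1+Rx_2+R$. A double Ore extension is both, with the same generators. Graded means all relations are homogeneous with $\deg x_1=\deg x_2=1$. A ring $A$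 is a skew PBW extension of $R$ in $x_1,\dots,x_n$ if $R\subseteq A$; $A$ is a free left $R$-module on the monomials $x_1^{\alpha_1}\cdots x_n^{\alpha_n}$; for each $i$ and $r\ne0$ there is $c_{i,r}\in R\setminus\{0\}$ with $x_ir-c_{i,r}x_i\in R$; for all $i,j$ there is $c_{i,j}\in R\setminus\{0\}$ with $x_jx_i-c_{i,j}x_ix_j\in R+Rx_1+\cdots+Rx_n$; then $x_ir=\sigma_i(r)x_i+\delta_i(r)$ with $\sigma_i$ injective endomorphism, $\delta_i$ a $\sigma_i$-derivation. Bijective: all $\sigma_i$ bijective and $c_{i,j}$ invertible. Graded skew PBW extension: bijective, $R$ $\mathbb N$-graded, $\sigma_i$ graded, $\delta_i(R_m)\subseteq R_{m+1}$, $x_jx_i-c_{i,j}x_ix_j\in R_2+R_1x_1+\cdots+R_1x_n$ with $c_{i,j}\in R_0$. *)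

(* Defs.v *)
From HB Require Import structures.
From mathcomp Require Import all_boot all_order all_algebra.
Set Implicit Arguments. Unset Strict Implicit. Unset Printing Implicit Defensive.
Import GRing.Theory.
Local Open Scope ring_scope.

(* Throughout: K a field, A a K-algebra ([algType K], scalars central),
   R a sub-K-algebra of A given as a predicate [R : A -> Prop],
   and [Rg n] its homogeneous component of degree n. *)

Section Defs.
Variables (K : fieldType) (A : algType K).

Definition is_subalgebra (R : A -> Prop) : Prop :=
  [/\ R 1,
      forall r s, R r -> R s -> R (r + s),
      forall r s, R r -> R s -> R (r * s)
    & forall (k : K) r, R r -> R (k *: r)].

Definition connected_graded (R : A -> Prop) (Rg : nat -> A -> Prop) : Prop :=
  [/\ is_subalgebra R,
      forall n, [/\ (forall r, Rg n r -> R r),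
                    Rg n 0,
                    forall r s, Rg n r -> Rg n s -> Rg n (r + s)
                  & forall (k : K) r, Rg n r -> Rg n (k *: r)],
      forall m n r s, Rg m r -> Rg n s -> Rg (m + n)%N (r * s),
      (forall r, R r -> exists (N : nat) (c : nat -> A),
                (forall n, Rg n (c n)) /\ r = \sum_(n < N) c n) /\
      (forall (N : nat) (c : nat -> A), (forall n, Rg n (c n)) ->
                \sum_(n < N) c n = 0 -> forall n, (n < N)%N -> c n = 0)
    & forall r, Rg 0%N r <-> exists k : K, r = k%:A].

Definition left_free_basis (R : A -> Prop) (x1 x2 : A) : Prop :=
  (forall y : A, exists (N : nat) (c : nat -> nat -> A),
      (forall a b, R (c a b)) /\
      y = \sum_(a < N) \sum_(b < N) c a b * (x1 ^+ a * x2 ^+ b)) /\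
  (forall (N : nat) (c : nat -> nat -> A), (forall a b, R (c a b)) ->
      \sum_(a < N) \sum_(b < N) c a b * (x1 ^+ a * x2 ^+ b) = 0 ->
      forall a b, (a < N)%N -> (b < N)%N -> c a b = 0).

Definition right_free_basis (R : A -> Prop) (x1 x2 : A) : Prop :=
  (forall y : A, exists (N : nat) (c : nat -> nat -> A),
      (forall a b, R (c a b)) /\
      y = \sum_(a < N) \sum_(b < N) (x1 ^+ a * x2 ^+ b) * c a b) /\
  (forall (N : nat) (c : nat -> nat -> A), (forall a b, R (c a b)) ->
      \sum_(a < N) \sum_(b < N) (x1 ^+ a * x2 ^+ b) * c a b = 0 ->
      forall a b, (a < N)%N -> (b < N)%N -> c a b = 0).

(* Graded right double Ore extension of R in A with generators x1, x2, relation
   x2 x1 = p12 x1 x2 + p11 x1^2 + tau1 x1 + tau2 x2 + tau0, and maps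
   x_i r = sigma_i1(r) x1 + sigma_i2(r) x2 + delta_i(r)  (r in R).
   (Generation by R, x1, x2 follows from the spanning part of the basis.)
   Gradedness (deg x1 = deg x2 = 1, homogeneous relations): tau1, tau2 in R_1,
   tau0 in R_2, sigma_ij(R_m) <= R_m, delta_i(R_m) <= R_(m+1). *)
Definition graded_right_double_ore (R : A -> Prop) (Rg : nat -> A -> Prop)
    (x1 x2 : A) (p12 p11 : K) (tau1 tau2 tau0 : A)
    (s11 s12 s21 s22 d1 d2 : A -> A) : Prop :=
  [/\ R tau1 /\ R tau2 /\ R tau0,
      x2 * x1 = p12 *: (x1 * x2) + p11 *: (x1 ^+ 2) + tau1 * x1 + tau2 * x2 + tau0,
      left_free_basis R x1 x2,
      (forall r, R r ->
        [/\ R (s11 r), R (s12 r), R (d1 r) &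
            x1 * r = s11 r * x1 + s12 r * x2 + d1 r]) /\
      (forall r, R r ->
        [/\ R (s21 r), R (s22 r), R (d2 r) &
            x2 * r = s21 r * x1 + s22 r * x2 + d2 r])
    & (Rg 1%N tau1 /\ Rg 1%N tau2 /\ Rg 2%N tau0) /\
      (forall m r, Rg m r ->
        [/\ Rg m (s11 r), Rg m (s12 r), Rg m (s21 r), Rg m (s22 r) &
            Rg m.+1 (d1 r) /\ Rg m.+1 (d2 r)])].

Definition graded_left_double_ore (R : A -> Prop) (Rg : nat -> A -> Prop)
    (x1 x2 : A) : Prop :=
  exists (q12 q11 : K) (t1 t2 t0 : A),
  [/\ R t1 /\ R t2 /\ R t0,
      x1 * x2 = q12 *: (x2 * x1) + q11 *: (x1 ^+ 2) + x1 * t1 + x2 * t2 + t0,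
      right_free_basis R x1 x2,
      forall r, R r -> (exists s1 s2 s0, [/\ R s1, R s2, R s0 &
                          x1 * r = s1 * x1 + s2 * x2 + s0]) /\
                       (exists s1 s2 s0, [/\ R s1, R s2, R s0 &
                          x2 * r = s1 * x1 + s2 * x2 + s0])
    & Rg 1%N t1 /\ Rg 1%N t2 /\ Rg 2%N t0].

(* Graded double Ore extension: both, with the same generators; the data
   p12 p11 tau sigma delta are those of the right structure. *)
Definition graded_double_ore (R : A -> Prop) (Rg : nat -> A -> Prop)
    (x1 x2 : A) (p12 p11 : K) (tau1 tau2 tau0 : A)
    (s11 s12 s21 s22 d1 d2 : A -> A) : Prop :=
  graded_right_double_ore R Rg x1 x2 p12 p11 tau1 tau2 tau0 s11 s12 s21 s22 d1 d2
  /\ graded_left_double_ore R Rg x1 x2.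

Definition bijective_on (R : A -> Prop) (f : A -> A) : Prop :=
  [/\ forall r, R r -> R (f r),
      forall r s, R r -> R s -> f r = f s -> r = s
    & forall s, R s -> exists r, R r /\ f r = s].

Definition automorphism_on (R : A -> Prop) (f : A -> A) : Prop :=
  [/\ bijective_on R f,
      forall r s, R r -> R s -> f (r + s) = f r + f s,
      forall r s, R r -> R s -> f (r * s) = f r * f s,
      forall (k : K) r, R r -> f (k *: r) = k *: f r
    & f 1 = 1].

Definition gen (x1 x2 : A) (i : 'I_2) : A := if val i == 0%N then x1 else x2.

Definition graded_skew_PBW (R : A -> Prop) (Rg : nat -> A -> Prop)
    (x1 x2 : A) : Prop :=
  [/\
      left_free_basis R x1 x2,
      forall (i : 'I_2) r, R r -> r <> 0 ->
        exists c, [/\ R c, c <> 0 & R (gen x1 x2 i * r - c * gen x1 x2 i)],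
      exists (sig del : 'I_2 -> A -> A), forall i : 'I_2,
        [/\ forall r, R r -> [/\ R (sig i r), R (del i r) &
               gen x1 x2 i * r = sig i r * gen x1 x2 i + del i r],
            bijective_on R (sig i)
          & forall m r, Rg m r -> Rg m (sig i r) /\ Rg m.+1 (del i r)]
    &
      forall i j : 'I_2, exists c,
        [/\ R c, c <> 0, Rg 0%N c,
            exists d, [/\ R d, c * d = 1 & d * c = 1]
          & exists s0 s1 s2, [/\ Rg 2%N s0, Rg 1%N s1, Rg 1%N s2 &
              gen x1 x2 j * gen x1 x2 i - c * (gen x1 x2 i * gen x1 x2 j)
                = s0 + s1 * x1 + s2 * x2]]].

End Defs.

(* Main.v *)
Require Import Defs.
From HB Require Import structures.
From mathcomp Require Import all_boot all_order all_algebra.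
Import GRing.Theory.
Local Open Scope ring_scope.

Section Helpers.
Variables (K : fieldType) (A : algType K).
Implicit Types (R : A -> Prop).

Definition cf (u1 u2 u0 u3 u4 : A) (a b : nat) : A :=
  match a, b with
  | 0, 0 => u0 | 1, 0 => u1 | 0, 1 => u2 | 2, 0 => u3 | 1, 1 => u4
  | _, _ => 0 end.

Lemma sum5 (x1 x2 u1 u2 u0 u3 u4 : A) :
  \sum_(a < 3) \sum_(b < 3) cf u1 u2 u0 u3 u4 a b * (x1 ^+ a * x2 ^+ b)
  = u1 * x1 + u2 * x2 + u0 + u3 * x1 ^+ 2 + u4 * (x1 * x2).
Proof.
rewrite !big_ord_recr !big_ord0 /= !mul0r !add0r !addr0 !expr0 !expr1 !mulr1 !mul1r.
by rewrite !addrA [LHS](ACl (3*2*1*5*4)).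
Qed.

Lemma uniq_eq R x1 x2 (N : nat) (c d : nat -> nat -> A) :
  (forall r, R r -> R (- r)) -> (forall r s, R r -> R s -> R (r + s)) ->
  left_free_basis R x1 x2 ->
  (forall a b, R (c a b)) -> (forall a b, R (d a b)) ->
  \sum_(a < N) \sum_(b < N) c a b * (x1 ^+ a * x2 ^+ b) =
  \sum_(a < N) \sum_(b < N) d a b * (x1 ^+ a * x2 ^+ b) ->
  forall a b, (a < N)%N -> (b < N)%N -> c a b = d a b.
Proof.
move=> RN RD [_ Hu] Rc Rd E a b ha hb.
apply/eqP; rewrite -subr_eq0; apply/eqP.
apply: (Hu N (fun a b => c a b - d a b)) => //.
  by move=> a' b'; apply: RD => //; apply: RN.
under eq_bigr do under eq_bigr do rewrite mulrBl.
under eq_bigr do rewrite sumrB.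
by rewrite sumrB E subrr.
Qed.

Lemma uniq5 R x1 x2 (u1 u2 u0 u3 u4 v1 v2 v0 v3 v4 : A) :
  R 0 -> (forall r, R r -> R (- r)) -> (forall r s, R r -> R s -> R (r + s)) ->
  left_free_basis R x1 x2 ->
  R u1 -> R u2 -> R u0 -> R u3 -> R u4 ->
  R v1 -> R v2 -> R v0 -> R v3 -> R v4 ->
  u1 * x1 + u2 * x2 + u0 + u3 * x1 ^+ 2 + u4 * (x1 * x2) =
  v1 * x1 + v2 * x2 + v0 + v3 * x1 ^+ 2 + v4 * (x1 * x2) ->
  [/\ u1 = v1, u2 = v2, u0 = v0, u3 = v3 & u4 = v4].
Proof.
move=> R0 RN RD Hf Ru1 Ru2 Ru0 Ru3 Ru4 Rv1 Rv2 Rv0 Rv3 Rv4 E.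
have H := @uniq_eq R x1 x2 3 (cf u1 u2 u0 u3 u4) (cf v1 v2 v0 v3 v4) RN RD Hf.
have Rcf : forall w1 w2 w0 w3 w4, R w1 -> R w2 -> R w0 -> R w3 -> R w4 ->
   forall a b, R (cf w1 w2 w0 w3 w4 a b).
  by move=> w1 w2 w0 w3 w4 ? ? ? ? ? [|[|[|a]]] [|[|b]].
have {}H := H (Rcf _ _ _ _ _ Ru1 Ru2 Ru0 Ru3 Ru4) (Rcf _ _ _ _ _ Rv1 Rv2 Rv0 Rv3 Rv4).
rewrite !sum5 in H; have {}H := H E.
by split; [exact: (H 1 0) | exact: (H 0 1) | exact: (H 0 0) | exact: (H 2 0) | exact: (H 1 1)].
Qed.

Lemma auto_lemma R y (f d : A -> A) :
  is_subalgebra R ->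
  (forall a b a' b', R a -> R b -> R a' -> R b' -> a * y + b = a' * y + b' -> a = a' /\ b = b') ->
  (forall r, R r -> [/\ R (f r), R (d r) & y * r = f r * y + d r]) ->
  Defs.bijective_on R f -> automorphism_on R f.
Proof.
move=> [R1 RD RM RZ] U Hf Hb.
have R0 : R 0 by rewrite -(scale0r 1); apply: RZ.
split => //.
- move=> r s Rr Rs.
  have [Rfr Rdr Er] := Hf r Rr; have [Rfs Rds Es] := Hf s Rs.
  have [Rfrs Rdrs Ers] := Hf (r + s) (RD _ _ Rr Rs).
  have [] := U (f (r + s)) (d (r + s)) (f r + f s) (d r + d s) => //; try by apply: RD.
  by rewrite -Ers mulrDr Er Es mulrDl addrACA.
- move=> r s Rr Rs.
  have [Rfr Rdr Er] := Hf r Rr; have [Rfs Rds Es] := Hf s Rs.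
  have [Rfrs Rdrs Ers] := Hf (r * s) (RM _ _ Rr Rs).
  have [] := U (f (r * s)) (d (r * s)) (f r * f s) (f r * d s + d r * s) => //;
    try by (apply: RD || apply: RM) => //; apply: RM.
  by rewrite -Ers mulrA Er mulrDl -mulrA Es mulrDr mulrA addrA.
- move=> k r Rr.
  have [Rfr Rdr Er] := Hf r Rr.
  have [Rfrs Rdrs Ers] := Hf (k *: r) (RZ _ _ Rr).
  have [] := U (f (k *: r)) (d (k *: r)) (k *: f r) (k *: d r) => //; try by apply: RZ.
  by rewrite -Ers -scalerAr Er scalerDr scalerAl.
- have [Rf1 Rd1 E1] := Hf 1 R1.
  have [] := U (f 1) (d 1) 1 0 => //.
  by rewrite -E1 mulr1 mul1r addr0.
Qed.

End Helpers.

Theorem theorem3p8 (K : fieldType) (A : algType K)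
  (R : A -> Prop) (Rg : nat -> A -> Prop) (x1 x2 : A) (p12 p11 : K)
  (tau1 tau2 tau0 : A) (s11 s12 s21 s22 d1 d2 : A -> A) :
  connected_graded R Rg ->
  graded_double_ore R Rg x1 x2 p12 p11 tau1 tau2 tau0 s11 s12 s21 s22 d1 d2 ->
  (graded_skew_PBW R Rg x1 x2 <->
   [/\ p12 != 0, p11 = 0, automorphism_on R s11, automorphism_on R s22
     & forall r, R r -> s12 r = 0 /\ s21 r = 0]).
Proof.
move=> [HRsub Hcomp Hmul [Hdec Huniq] HR0]
  [[[HRt1 [HRt2 HRt0]] Hrel Hfree [Hx1 Hx2] [[Gt1 [Gt2 Gt0]] Hgr]] _].
have [R1 RD RM RZ] := HRsub.
have R0 : R 0 by rewrite -(scale0r 1); apply: RZ.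
have RN : forall r, R r -> R (- r) by move=> r Rr; rewrite -scaleN1r; apply: RZ.
have U := @uniq5 K A R x1 x2 _ _ _ _ _ _ _ _ _ _ R0 RN RD Hfree.
have RA : forall k : K, R k%:A by move=> k; apply: RZ.
have oneA : (1 : A) != 0 := oner_neq0 _.
have algA0 : forall k : K, (k%:A == 0 :> A) = (k == 0).
  by move=> k; rewrite scaler_eq0 (negbTE oneA) orbF.
split.
- move=> [_ Hc [sig [del Hsig]] Hcc].
  have [Hs0 Hb0 Hg0] := Hsig ord0.
  have [Hs1 Hb1 Hg1] := Hsig (@Ordinal 2 1 erefl).
  rewrite /gen /= in Hs0 Hs1.
  have E1 : forall r, R r -> [/\ s11 r = sig ord0 r, s12 r = 0 & d1 r = del ord0 r].
    move=> r Rr; have [Ra Rb Rc E] := Hx1 r Rr; have [Rs Rd E'] := Hs0 r Rr.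
    have [] := U (s11 r) (s12 r) (d1 r) 0 0 (sig ord0 r) 0 (del ord0 r) 0 0 => //.
    by rewrite !mul0r !addr0 -E -E'.
  have E2 : forall r, R r -> [/\ s22 r = sig (@Ordinal 2 1 erefl) r, s21 r = 0
                               & d2 r = del (@Ordinal 2 1 erefl) r].
    move=> r Rr; have [Ra Rb Rc E] := Hx2 r Rr; have [Rs Rd E'] := Hs1 r Rr.
    have [] := U (s21 r) (s22 r) (d2 r) 0 0 0 (sig (@Ordinal 2 1 erefl) r)
        (del (@Ordinal 2 1 erefl) r) 0 0 => //.
    by rewrite !mul0r !addr0 add0r -E -E'.
  have [c [Rc cn0 Gc _ [s0 [s1 [s2 [G0 G1 G2 Ec]]]]]] :=
    Hcc ord0 (@Ordinal 2 1 erefl).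
  rewrite /gen /= in Ec.
  have [k ck] := (HR0 c).1 Gc.
  have Rs0 : R s0 by have [] := Hcomp 2%N; auto.
  have Rs1 : R s1 by have [] := Hcomp 1%N; auto.
  have Rs2 : R s2 by have [] := Hcomp 1%N; auto.
  have Heq : tau1 * x1 + tau2 * x2 + tau0 + p11%:A * x1 ^+ 2 + p12%:A * (x1 * x2) =
      s1 * x1 + s2 * x2 + s0 + 0 * x1 ^+ 2 + c * (x1 * x2).
    have -> : tau1 * x1 + tau2 * x2 + tau0 + p11%:A * x1 ^+ 2 + p12%:A * (x1 * x2)
      = x2 * x1 by rewrite Hrel !mulr_algl [RHS](ACl (3*4*5*2*1)).
    move/eqP: Ec; rewrite subr_eq => /eqP ->.
    by rewrite mul0r addr0 [RHS](ACl (3*1*2*4)).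
  have [_ _ _ Hp11 Hp12] := U tau1 tau2 tau0 p11%:A p12%:A s1 s2 s0 0 c
     HRt1 HRt2 HRt0 (RA _) (RA _) Rs1 Rs2 Rs0 R0 Rc Heq.
  split.
  + by rewrite -algA0 Hp12; apply/eqP.
  + by apply/eqP; rewrite -algA0 Hp11.
  + apply: (@auto_lemma K A R x1 s11 d1) => //.
    * move=> a b a' b' Ra Rb Ra' Rb' E.
      have [] := U a 0 b 0 0 a' 0 b' 0 0 => //.
      by rewrite !mul0r !addr0.
    * move=> r Rr; have [Ra Rb Rc' E] := Hx1 r Rr; split => //.
      by rewrite E; have [_ -> _] := E1 r Rr; rewrite mul0r addr0.
    * have [HbR Hbi Hbs] := Hb0; split.
      - by move=> r Rr; have [] := Hx1 r Rr.
      - move=> r s Rr Rs; have [-> _ _] := E1 r Rr; have [-> _ _] := E1 s Rs.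
        exact: Hbi.
      - move=> s Rs; have [r [Rr Er]] := Hbs s Rs; exists r; split => //.
        by have [-> _ _] := E1 r Rr.
  + apply: (@auto_lemma K A R x2 s22 d2) => //.
    * move=> a b a' b' Ra Rb Ra' Rb' E.
      have [] := U 0 a b 0 0 0 a' b' 0 0 => //.
      by rewrite !mul0r !addr0 !add0r.
    * move=> r Rr; have [Ra Rb Rc' E] := Hx2 r Rr; split => //.
      by rewrite E; have [_ -> _] := E2 r Rr; rewrite mul0r add0r.
    * have [HbR Hbi Hbs] := Hb1; split.
      - by move=> r Rr; have [] := Hx2 r Rr.
      - move=> r s Rr Rs; have [-> _ _] := E2 r Rr; have [-> _ _] := E2 s Rs.
        exact: Hbi.
      - move=> s Rs; have [r [Rr Er]] := Hbs s Rs; exists r; split => //.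
        by have [-> _ _] := E2 r Rr.
  + by move=> r Rr; have [_ -> _] := E1 r Rr; have [_ -> _] := E2 r Rr.
- move=> [p12n0 p11e0 Au11 Au22 H0].
  have [[Rs11 inj11 sur11] _ _ sc11 _] := Au11.
  have [[Rs22 inj22 sur22] _ _ sc22 _] := Au22.
  have f11 : s11 0 = 0 by have := sc11 0 1 R1; rewrite !scale0r.
  have f22 : s22 0 = 0 by have := sc22 0 1 R1; rewrite !scale0r.
  have [_ G2 _ S2] := Hcomp 2%N; have [_ G1 _ S1] := Hcomp 1%N.
  split.
  + exact: Hfree.
  + move=> [[|[|i]] Hi] r Rr rn0 //; rewrite /gen /=.
    * exists (s11 r); have [Ra Rb Rc E] := Hx1 r Rr; split => //.
      - by move=> h; apply: rn0; apply: inj11 => //; rewrite h f11.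
      - by rewrite E (H0 r Rr).1 mul0r addr0 addrAC subrr add0r.
    * exists (s22 r); have [Ra Rb Rc E] := Hx2 r Rr; split => //.
      - by move=> h; apply: rn0; apply: inj22 => //; rewrite h f22.
      - by rewrite E (H0 r Rr).2 mul0r add0r addrAC subrr add0r.
  + exists (fun i : 'I_2 => if val i == 0%N then s11 else s22).
    exists (fun i : 'I_2 => if val i == 0%N then d1 else d2).
    move=> [[|[|i]] Hi] //; rewrite /gen /=; split.
    * move=> r Rr; have [Ra Rb Rc E] := Hx1 r Rr; split => //.
      by rewrite E (H0 r Rr).1 mul0r addr0.
    * by split.
    * by move=> m r Gr; have [? ? ? ? [? ?]] := Hgr m r Gr.
    * move=> r Rr; have [Ra Rb Rc E] := Hx2 r Rr; split => //.
      by rewrite E (H0 r Rr).2 mul0r add0r.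
    * by split.
    * by move=> m r Gr; have [? ? ? ? [? ?]] := Hgr m r Gr.
  + move=> [[|[|i]] Hi] [[|[|j]] Hj] //; rewrite /gen /=.
    * exists 1; split => //.
      - exact/eqP.
      - by apply/HR0; exists 1; rewrite scale1r.
      - by exists 1; rewrite mulr1.
      - by exists 0, 0, 0; split => //; rewrite mul1r subrr !mul0r !addr0.
    * exists p12%:A; split => //.
      - by apply/eqP; rewrite algA0.
      - by apply/HR0; exists p12.
      - by exists p12^-1%:A; split; [exact: RA| |]; rewrite mulr_algl scalerA ?mulfV ?mulVf // scale1r.
      - exists tau0, tau1, tau2; split => //.
        rewrite Hrel p11e0 scale0r addr0 mulr_algl.
        apply/eqP; rewrite subr_eq; apply/eqP.
        by rewrite [RHS](ACl (4*2*3*1)).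
    * exists p12^-1%:A; split => //.
      - by apply/eqP; rewrite algA0 invr_eq0.
      - by apply/HR0; exists p12^-1.
      - by exists p12%:A; split; [exact: RA| |]; rewrite mulr_algl scalerA ?mulfV ?mulVf // scale1r.
      - exists ((- p12^-1) *: tau0), ((- p12^-1) *: tau1), ((- p12^-1) *: tau2).
        split; try by apply: S1. by apply: S2.
        rewrite mulr_algl Hrel p11e0 scale0r addr0 !scalerDr scalerA mulVf // scale1r.
        rewrite !scaleNr !mulNr -!scalerAl !opprD !addrA subrr add0r.
        by rewrite [RHS](ACl (2*3*1)).
    * exists 1; split => //.
      - exact/eqP.
      - by apply/HR0; exists 1; rewrite scale1r.
      - by exists 1; rewrite mulr1.
      - by exists 0, 0, 0; split => //; rewrite mul1r subrr !mul0r !addr0.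
Qed.
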